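(* Let $r(t) \in \mathbb{Z}[t]$ be a good polynomial. Then $r(1) \cdot \operatorname{Cong}(r(t)) \cdot \operatorname{Discr}_\ast(r(t)) \cdot \operatorname{Prod}_\ast(r(t)) \neq 0$.
   Context: Here $\mathbb{N} = \{1,2,3,\dots\}$. A polynomial $r(t) \in \mathbb{Z}[t]$ is bad if there exist $u \in \mathbb{N}$ and $s(t) \in \mathbb{Z}[t]\setminus \mathbb{Z}$ such that $s(t^{u+1})$ divides $r(0)\cdot r(1)\cdot r(t)$ in $\mathbb{Z}[t]$; otherwise $r(t)$ is good. For $r(t) = \sum_i a_i t^i \in \mathbb{Z}[t]$ and integers $u > j \ge 0$, let $r_{u,j}(t) := \sum_{i \equiv j \bmod u} a_i t^i$. The periodic congruence number $\operatorname{Cong}(r(t))$ is the non-negative generator of the ideal $\mathbb{Z} \cap \bigcap_{1 < u \le \deg(r(t))+1} \big(r_{u,0}(t)\mathbb{Z}[t] + \cdots + r_{u,u-1}(t)\mathbb{Z}[t]\big)$ of $\mathbb{Z}$. If $r(t)$ is constant, $\operatorname{Discr}_\ast(r(t)) := r(t)$ and $\operatorname{Prod}_\ast(r(t)) := 1$. Otherwise let $d = \deg r$, $a$ the leading coefficient, $\lambda_1,\dots,\lambda_l \in \overline{\mathbb{Q}}$ the distinct roots with multiplicities $m_1,\dots,m_l$, $m = \max_i m_i$, and set $\operatorname{Discr}_\ast(r(t)) := a^{1+2d^2}\,(m-1)!\,\prod_{1\le i\ne j\le l}(\lambda_i-\lambda_j)^m$ and $\operatorname{Prod}_\ast(r(t))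 := a^{2d^3}\prod_{1\le i,j\le l,\ r(\lambda_i\lambda_j)\neq 0} r(\lambda_i\lambda_j)$. *)

(* Defs.v *)
From Stdlib Require Import ClassicalEpsilon.
From mathcomp Require Import all_boot all_order all_algebra all_field.
Set Implicit Arguments. Unset Strict Implicit. Unset Printing Implicit Defensive.
Import Order.TTheory GRing.Theory Num.Theory.
Local Open Scope ring_scope.

Definition bad (r : {poly int}) : Prop :=
  exists (u : nat) (s : {poly int}), (0 < u)%N /\ (1 < size s)%N /\
    exists q : {poly int}, (r.[0] * r.[1]) *: r = q * (s \Po 'X^(u.+1)).

Definition good (r : {poly int}) : Prop := ~ bad r.

Definition rpart (r : {poly int}) (u j : nat) : {poly int} :=
  \poly_(i < size r) (if (i %% u == j)%N then r`_i else 0).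

(* the ideal Z ∩ ⋂_{1<u<=deg r + 1} (r_{u,0}Z[t] + ... + r_{u,u-1}Z[t]) *)
Definition cong_ideal (r : {poly int}) (n : int) : Prop :=
  forall u : nat, (1 < u)%N -> (u <= (size r).-1 + 1)%N ->
    exists q : nat -> {poly int}, n%:P = \sum_(j < u) rpart r u j * q j.

Definition Cong (r : {poly int}) : int :=
  epsilon (inhabits 0) (fun c : int =>
    0 <= c /\ forall n, cong_ideal r n <-> (c %| n)%Z).

Definition rC (r : {poly int}) : {poly algC} := map_poly (fun z : int => z%:~R) r.

Definition droots (p : {poly algC}) : seq algC :=
  epsilon (inhabits [::]) (fun s : seq algC =>
    uniq s /\ forall x, root p x = (x \in s)).

Definition Discr_star (r : {poly int}) : algC :=
  if (size r <= 1)%N then (r`_0)%:~R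
  else
    let d := (size r).-1 in
    let a : algC := (lead_coef r)%:~R in
    let s := droots (rC r) in
    let m := (\max_(x <- s) mup x (rC r))%N in
    a ^+ (1 + 2 * d ^ 2) * ((m.-1)`!)%:R *
      \prod_(x <- s) \prod_(y <- s | x != y) (x - y) ^+ m.

Definition Prod_star (r : {poly int}) : algC :=
  if (size r <= 1)%N then 1
  else
    let d := (size r).-1 in
    let a : algC := (lead_coef r)%:~R in
    let s := droots (rC r) in
    a ^+ (2 * d ^ 3) *
      \prod_(x <- s) \prod_(y <- s | (rC r).[x * y] != 0) (rC r).[x * y].

(* Main.v *)
From Stdlib Require Import ClassicalEpsilon.
Require Import Defs.
From mathcomp Require Import all_boot all_order all_algebra all_field.
Set Implicit Arguments. Unset Strict Implicit. Unset Printing Implicit Defensive.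
Import Order.TTheory GRing.Theory Num.Theory.
Local Open Scope ring_scope.

Local Notation phi := (map_poly (intr : int -> rat)).

Definition Rj (r : {poly int}) (u j : nat) : {poly int} :=
  \poly_(i < size r) r`_(i * u + j).

Lemma rpartE r u j : (j < u)%N -> rpart r u j = 'X^j * (Rj r u j \Po 'X^u).
Proof.
move=> ju; have u0 : (0 < u)%N by apply: leq_ltn_trans ju.
apply/polyP => k; rewrite coef_poly coefXnM.
case: (ltnP k j) => kj.
  rewrite (modn_small (ltn_trans kj ju)) (ltn_eqF kj); by case: ifP.
rewrite coef_comp_poly_Xn //.
have -> : ((k %% u)%N == j) = (u %| k - j)%N.
  by rewrite -eqn_mod_dvd // (modn_small ju).
case hd : (u %| k - j)%N; last by case: ifP.
rewrite coef_poly divnK // subnK //.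
case: (ltnP k (size r)) => ks.
  by rewrite (leq_ltn_trans _ ks) // (leq_trans (leq_div _ _)) // leq_subr.
by rewrite nth_default // if_same.
Qed.

Lemma rpart_sum r u : (0 < u)%N -> r = \sum_(j < u) rpart r u j.
Proof.
move=> u0; apply/polyP => k; rewrite coef_sum.
under eq_bigr do rewrite coef_poly.
case: (ltnP k (size r)) => ks; last first.
  by rewrite nth_default // big1 // => j _; rewrite if_same.
rewrite -big_mkcond /=.
under eq_bigl do rewrite eq_sym.
by rewrite (big_ord1_eq _ (fun=> r`_k)) ltn_pmod.
Qed.

Lemma comp_struct (p : {poly int}) u : (0 < u)%N ->
  (forall i, ~~ (u %| i)%N -> p`_i = 0) ->
  p = (\poly_(i < size p) p`_(i * u)) \Po 'X^u.
Proof.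
move=> u0 hp; apply/polyP => k; rewrite coef_comp_poly_Xn //.
case: ifP => hk; last by rewrite hp // hk.
rewrite coef_poly divnK //; case: ltnP => // hs.
rewrite nth_default //; apply: leq_trans hs _.
by rewrite -{2}(divnK hk) leq_pmulr.
Qed.

Fixpoint Gm (F : nat -> {poly rat}) (n : nat) : {poly rat} :=
  match n with 0 => 0 | n'.+1 => gcdp (Gm F n') (F n') end.

Lemma Gm_dvd F n j : (j < n)%N -> Gm F n %| F j.
Proof.
elim: n => // n IH; rewrite ltnS leq_eqVlt => /orP[/eqP -> | jn] /=.
  exact: dvdp_gcdr.
exact: dvdp_trans (dvdp_gcdl _ _) (IH jn).
Qed.

Lemma Gm_bezout F n : exists x : nat -> {poly rat},
  Gm F n %= \sum_(j < n) x j * F j.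
Proof.
elim: n => [|n [x Hx]]; first by exists (fun=> 0); rewrite big_ord0 eqpxx.
have [[a b] /= Hab] := Bezoutp (Gm F n) (F n).
have [[c1 c2] /andP[/= c10 c20] Hc] := eqpP _ _ Hx.
pose k := c2 / c1.
have HG : Gm F n = k *: \sum_(j < n) x j * F j.
  by rewrite -[LHS]scale1r -(mulVf c10) -scalerA Hc scalerA mulrC.
exists (fun j => if (j < n)%N then k *: (a * x j) else b).
rewrite big_ord_recr /= ltnn /=.
under eq_bigr => i _ do rewrite (ltn_ord i).
rewrite eqp_sym (eqp_trans _ Hab) // HG.
suff -> : \sum_(i < n) k *: (a * x i) * F i = a * (k *: \sum_(j < n) x j * F j).
  exact: eqpxx.
rewrite -scalerAr mulr_sumr scaler_sumr; apply: eq_bigr => i _.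
by rewrite -scalerAl mulrA.
Qed.

Lemma common_denom (y : nat -> {poly rat}) n : exists N : int, N != 0 /\
  exists g : nat -> {poly int}, forall j, (j < n)%N -> N%:~R *: y j = phi (g j).
Proof.
elim: n => [|n [N [N0 [g HN]]]]; first by exists 1; split => //; exists (fun=> 0).
have [h [a a0 Hh]] := rat_poly_scale (y n).
exists (N * a); split; first by rewrite mulf_neq0.
exists (fun j => if j == n then N *: h else a *: g j).
move=> j; rewrite ltnS leq_eqVlt => /orP[/eqP -> | jn].
  rewrite eqxx Hh scalerA intrM -mulrA mulfV ?intr_eq0 // mulr1.
  by rewrite linearZ /=.
by rewrite (ltn_eqF jn) intrM mulrC -scalerA HN // linearZ.
Qed.

Lemma core r u : (1 < u)%N -> r.[0] * r.[1] != 0 -> ~ bad r ->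
  exists n : int, n != 0 /\ exists q : nat -> {poly int},
    n%:P = \sum_(j < u) rpart r u j * q j.
Proof.
move=> u1 r01 nb; have u0 : (0 < u)%N := ltnW u1.
have r0 : r.[0] != 0 by apply: contraNneq r01 => ->; rewrite mul0r.
have rn0 : r != 0 by apply: contraNneq r0 => ->; rewrite horner0.
pose E j := if j == 0%N then phi (Rj r u 0) else 'X * phi (Rj r u j).
pose D := Gm E u.
have E0 : (E 0%N).[0] = r.[0]%:~R.
  rewrite /E eqxx horner_coef0 coef_map /= coef_poly size_poly_gt0 rn0.
  by rewrite mul0n add0n -horner_coef0.
have E0nz : E 0%N != 0.
  have : (E 0%N).[0] != 0 by rewrite E0 intr_eq0.
  by apply: contraNneq => ->; rewrite horner0.
have DE : forall j, (j < u)%N -> D %| E j by move=> j ju; apply: Gm_dvd.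
have D0 : D != 0.
  apply: contraNneq E0nz => h; have := DE 0%N u0; by rewrite h dvd0p.
have EX : forall j, (j < u)%N -> E j \Po 'X^u =
    phi (rpart r u j) * 'X^(if j == 0%N then 0 else (u - j)%N).
  move=> j ju; rewrite rpartE // rmorphM /= map_polyXn map_comp_poly /= map_polyXn.
  rewrite /E; case: eqP => [-> | _].
    by rewrite expr0 mul1r mulr1.
  rewrite comp_polyM comp_polyX [RHS]mulrC mulrA -exprD subnK //.
  exact: ltnW.
have [Hs1 | Hs1] := eqVneq (size D) 1%N.
  have [x Hx] := Gm_bezout E u.
  have /size_poly1P [c c0 Hc] : size (\sum_(j < u) x j * E j) == 1%N.
    by rewrite -(eqp_size Hx) -/D Hs1.
  pose y j := (x j \Po 'X^u) * 'X^(if j == 0%N then 0 else (u - j)%N).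
  have Hy : c%:P = \sum_(j < u) phi (rpart r u j) * y j.
    rewrite -(comp_polyC c ('X^u)) -Hc linear_sum /=; apply: eq_bigr => j _.
    by rewrite comp_polyM /y mulrCA EX.
  have [N [N0 [g Hg]]] := common_denom y u.
  pose P := \sum_(j < u) rpart r u j * g j.
  have HP : phi P = (N%:~R * c)%:P.
    rewrite polyCM mul_polyC Hy scaler_sumr rmorph_sum /=.
    by apply: eq_bigr => j _; rewrite scalerAr Hg // rmorphM.
  have szP : size P = 1%N.
    by rewrite -size_rat_int_poly HP size_polyC mulf_neq0 ?intr_eq0.
  have HP0 := size1_polyC (eq_leq szP).
  exists (P`_0); split.
    by apply/eqP => h; move: szP; rewrite HP0 h polyC0 size_poly0.
  by exists g; rewrite -HP0.
exfalso; apply: nb.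
have Dgt1 : (1 < size D)%N.
  by rewrite ltn_neqAle eq_sym Hs1 /= size_poly_gt0.
have DX : coprimep D 'X.
  have := coprimep_XsubC D 0; rewrite polyC0 subr0 => ->.
  have /dvdpP [q Hq] := DE 0%N u0.
  rewrite /root; apply: contraTN E0nz => /eqP h.
  have : (E 0%N).[0] = 0 by rewrite Hq hornerM h mulr0.
  by rewrite E0 => /eqP; rewrite intr_eq0 (negbTE r0).
have DR : forall j, (j < u)%N -> D %| phi (Rj r u j).
  move=> j ju; have := DE j ju; rewrite /E; case: eqP => [-> // | _].
  by rewrite Gauss_dvdpr.
have Dr : (D \Po 'X^u) %| phi r.
  rewrite (rpart_sum r u0) rmorph_sum /=.
  apply: (big_ind (fun p => (D \Po 'X^u) %| p)) => [|p q|j _]; [exact: dvdp0 | exact: dvdp_add | ].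
  rewrite rpartE // rmorphM /= map_polyXn map_comp_poly /= map_polyXn.
  by apply: dvdp_mull; apply: dvdp_comp_poly; apply: DR.
have [p1 [a a0 Hp1] [w Hw]] := dvdpP_rat_int Dr.
have Hp1c : forall i, ~~ (u %| i)%N -> p1`_i = 0.
  move=> i hi; have := congr1 (fun p : {poly rat} => p`_i) Hp1.
  rewrite /= coef_comp_poly_Xn // (negbTE hi) coefZ coef_map /= => /esym/eqP.
  by rewrite mulf_eq0 (negbTE a0) intr_eq0 /= => /eqP.
set s := \poly_(i < size p1) p1`_(i * u).
have Hs : p1 = s \Po 'X^u := comp_struct u0 Hp1c.
have szp1 : size p1 = size (D \Po 'X^u).
  by rewrite Hp1 size_scale // size_rat_int_poly.
have sz : (1 < size (D \Po 'X^u))%N.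
  have := size_comp_poly D ('X^u); rewrite size_polyXn /= => h.
  have hp : (0 < (size D).-1 * u)%N.
    by rewrite muln_gt0 u0 andbT -subn1 subn_gt0.
  rewrite -h in hp; move: hp; case: (size (D \Po _)) => [|[|m]] //.
exists u.-1, s; split; first by rewrite -ltnS prednK.
split.
  rewrite ltnNge; apply/negP => hs1; move: sz.
  by rewrite -szp1 Hs (size1_polyC hs1) comp_polyC size_polyC; case: (_ != 0).
exists ((r.[0] * r.[1]) *: w); rewrite prednK // -Hs -scalerAl.
by rewrite [w * p1]mulrC -Hw.
Qed.

Definition cong_u (r : {poly int}) (u : nat) (n : int) : Prop :=
  exists q : nat -> {poly int}, n%:P = \sum_(j < u) rpart r u j * q j.

Lemma cong_u_lin r u a b x y :
  cong_u r u a -> cong_u r u b -> cong_u r u (x * a + y * b).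
Proof.
move=> [q Hq] [q' Hq']; exists (fun j => x%:P * q j + y%:P * q' j).
rewrite polyCD !polyCM Hq Hq' !mulr_sumr -big_split /=.
by apply: eq_bigr => j _; rewrite mulrDr; congr (_ + _); rewrite mulrCA.
Qed.

Lemma cong_all r m : r.[0] * r.[1] != 0 -> ~ bad r ->
  exists N : int, N != 0 /\ forall u, (1 < u)%N -> (u <= m)%N -> cong_u r u N.
Proof.
move=> r01 nb; elim: m => [|m [N [N0 HN]]].
  by exists 1; split => // u u1 /=; rewrite leqn0 => /eqP h; rewrite h in u1.
have [um | um] := ltnP 1 m.+1.
  have [n [n0 Hn]] := core um r01 nb.
  exists (n * N); split; first by rewrite mulf_neq0.
  move=> u u1; rewrite leq_eqVlt => /orP[/eqP -> | ].
    have -> : n * N = N * n + 0 * n by rewrite mul0r addr0 mulrC.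
    by apply: cong_u_lin; exact: Hn.
  rewrite ltnS => uu; have -> : n * N = n * N + 0 * N by rewrite mul0r addr0.
  by apply: cong_u_lin; apply: HN.
exists N; split => // u u1 uu; apply: HN => //.
by move: (leq_trans u1 uu); rewrite ltnS => /(leq_trans um); rewrite ltnn.
Qed.

Lemma gen_exists (S : int -> Prop) :
  (forall a b x y, S a -> S b -> S (x * a + y * b)) ->
  forall N, N != 0 -> S N ->
  exists c : int, 0 <= c /\ forall n, S n <-> (c %| n)%Z.
Proof.
move=> HS N N0 SN.
pose P k := (0 < k)%N && (if excluded_middle_informative (S k%:Z) then true else false).
have SP : forall k, P k -> S k%:Z.
  by move=> k /andP[_]; case: excluded_middle_informative.
have PS : forall k, (0 < k)%N -> S k%:Z -> P k.
  by move=> k k0 Sk; rewrite /P k0; case: excluded_middle_informative.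
have ex : exists k, P k.
  exists `|N|%N; apply: PS; first by rewrite absz_gt0.
  have -> : (`|N|%N)%:Z = (-1) ^+ (N < 0)%R * N + 0 * N.
    by rewrite mul0r addr0 abszE -normrEsign.
  exact: HS.
case: (ex_minnP ex) => c Pc minc.
exists c%:Z; split => // n; split => [Sn | /dvdzP [q ->]].
  have c0 : (0 < c)%N by case/andP: Pc.
  have Sc := SP _ Pc.
  apply/dvdz_mod0P.
  have Srm : S (n %% c%:Z)%Z.
    have -> : (n %% c%:Z)%Z = 1 * n + (- (n %/ c%:Z)%Z) * c%:Z.
      by rewrite mul1r mulNr; apply/eqP; rewrite eq_sym subr_eq addrC -divz_eq.
    exact: HS.
  apply/eqP; apply: contraT => rm0.
  have ge0 : 0 <= (n %% c%:Z)%Z by rewrite modz_ge0 // eqz_nat -lt0n.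
  have lt : (n %% c%:Z)%Z < c%:Z by rewrite ltz_pmod // ltz_nat.
  have Pk : P `|(n %% c%:Z)%Z|%N.
    apply: PS; first by rewrite absz_gt0.
    by rewrite gez0_abs.
  have := minc _ Pk; rewrite -lez_nat gez0_abs //.
  by rewrite leNgt lt.
have -> : q * c%:Z = q * c%:Z + 0 * c%:Z by rewrite mul0r addr0.
apply: HS; exact: SP.
Qed.

Theorem proposition1p9 (r : {poly int}) :
  good r ->
  (r.[1])%:~R * (Cong r)%:~R * Discr_star r * Prod_star r != 0 :> algC.
Proof.
move=> g.
have r01 : r.[0] * r.[1] != 0.
  apply/eqP => h; apply: g; exists 1%N, 'X; split => //; split.
    by rewrite size_polyX.
  by exists 0; rewrite h scale0r mul0r.
have r1 : r.[1] != 0 by apply: contraNneq r01 => ->; rewrite mulr0.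
have rn0 : r != 0 by apply: contraNneq r1 => ->; rewrite horner0.
have [N [N0 HN]] := cong_all ((size r).-1 + 1) r01 g.
have SN : cong_ideal r N by move=> u u1 uu; apply: HN.
have Slin : forall a b x y, cong_ideal r a -> cong_ideal r b ->
    cong_ideal r (x * a + y * b).
  move=> a b x y Ha Hb u u1 uu; apply: cong_u_lin; [exact: Ha | exact: Hb].
have [c [c0 Hc]] := gen_exists Slin N0 SN.
have HC : 0 <= Cong r /\ forall n, cong_ideal r n <-> (Cong r %| n)%Z.
  exact: (epsilon_spec (inhabits 0) (fun c : int =>
    0 <= c /\ forall n, cong_ideal r n <-> (c %| n)%Z) (ex_intro _ c (conj c0 Hc))).
have C0 : Cong r != 0.
  apply/eqP => C0; have := (HC.2 N).1 SN; rewrite C0 dvd0z.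
  by rewrite (negbTE N0).
rewrite !mulf_neq0 ?intr_eq0 //.
  rewrite /Discr_star; case: ifP => hs /=.
    rewrite intr_eq0; apply: contraNneq rn0 => h.
    by rewrite (size1_polyC hs) h polyC0.
  rewrite !mulf_neq0 //.
  - by rewrite expf_neq0 // intr_eq0 lead_coef_eq0.
  - by rewrite pnatr_eq0 -lt0n fact_gt0.
  apply: (big_ind (fun x : algC => x != 0)) => [|x y|x _]; [exact: oner_neq0 | exact: mulf_neq0 | ].
  apply: (big_ind (fun x : algC => x != 0)) => [|x' y|y xy]; [exact: oner_neq0 | exact: mulf_neq0 | ].
  by rewrite expf_neq0 // subr_eq0.
rewrite /Prod_star; case: ifP => hs /=; first exact: oner_neq0.
rewrite mulf_neq0 //.
  by rewrite expf_neq0 // intr_eq0 lead_coef_eq0.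
apply: (big_ind (fun x : algC => x != 0)) => [|x y|x _]; [exact: oner_neq0 | exact: mulf_neq0 | ].
by apply: (big_ind (fun x : algC => x != 0)) => [|x' y|y xy]; [exact: oner_neq0 | exact: mulf_neq0 | ].
Qed.
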